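(* Let $a>0$ and let $k$ be a non-negative integer. Let $\psi(t)=\sum_{n\ge1}e^{-\pi n^2 t/a}$, $\phi(t)=\sum_{n\ge1}e^{-\pi n^2 a t}$, and \[\epsilon_{2k+1}(a)=\frac{1}{4\pi a}\int_1^\infty \{a^{1/2}\phi(t)-\psi(t)\}\,\frac{(t-1)^{2k+1}}{(1+t)^{2k+5/2}}\,dt.\] Let $\Psi(\tau)=\sum_{n\ge1}e^{-\pi n^2\tau}$ for $\tau>0$ and $E_{2k+1}(a)=a^{1/4}\Psi(a)\,U(2k+2,\tfrac12,2\pi a)$. Then \[|\epsilon_{2k+1}(a)|<\mathcal{B}_{2k+1}(a):=\frac{a^{-3/4}(2k+1)!}{4\sqrt{2}\,\pi}\{E_{2k+1}(a)+E_{2k+1}(1/a)\}.\]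
   Context: $U(\alpha,b,z)$ denotes the confluent hypergeometric function of the second kind (Tricomi's function), which for $\alpha>0$, $\Re z>0$ has the representation $U(\alpha,b,z)=\frac{1}{\Gamma(\alpha)}\int_0^\infty e^{-zt}t^{\alpha-1}(1+t)^{b-\alpha-1}dt$. *)

(* Defs.v *)
From Stdlib Require Import Reals Arith Factorial.
From Coquelicot Require Import Coquelicot.
Open Scope R_scope.

Definition Psi (x : R) : R :=
  Series (fun n : nat => exp (- PI * (INR (S n))^2 * x)).

Definition psi_a (a t : R) : R :=
  Series (fun n : nat => exp (- PI * (INR (S n))^2 * t / a)).
Definition phi_a (a t : R) : R :=
  Series (fun n : nat => exp (- PI * (INR (S n))^2 * a * t)).

Definition Gamma (al : R) : R :=
  RInt_gen (fun t => exp (- t) * Rpower t (al - 1)) (at_right 0) (Rbar_locally p_infty).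

(* Tricomi's U for al > 0, Re z > 0:
   U(al,b,z) = 1/Gamma(al) int_0^oo e^{-zt} t^{al-1} (1+t)^{b-al-1} dt *)
Definition TricomiU (al b z : R) : R :=
  / Gamma al *
  RInt_gen (fun t => exp (- z * t) * Rpower t (al - 1) * Rpower (1 + t) (b - al - 1))
    (at_right 0) (Rbar_locally p_infty).

Definition epsilon_odd (k : nat) (a : R) : R :=
  / (4 * PI * a) *
  RInt_gen (fun t => (Rpower a (1/2) * phi_a a t - psi_a a t) *
                     ((t - 1) ^ (2 * k + 1) / Rpower (1 + t) (INR (2 * k) + 5/2)))
    (at_point 1) (Rbar_locally p_infty).

Definition E_odd (k : nat) (a : R) : R :=
  Rpower a (1/4) * Psi a * TricomiU (INR (2 * k + 2)) (1/2) (2 * PI * a).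

Definition B_odd (k : nat) (a : R) : R :=
  Rpower a (-3/4) * INR (Factorial.fact (2 * k + 1)) / (4 * sqrt 2 * PI) *
  (E_odd k a + E_odd k (/ a)).

(* Main.v *)
Require Import Defs.
From Stdlib Require Import Reals Lra Lia Factorial.
From Coquelicot Require Import Coquelicot.
Open Scope R_scope.


Lemma ball_R (x e y : R) : ball x e y <-> Rabs (y - x) < e.
Proof. reflexivity. Qed.

Lemma RIg_of_lim (f : R -> R) (a L : R) :
  (forall b, a <= b -> ex_RInt f a b) ->
  filterlim (fun b => RInt f a b) (Rbar_locally p_infty) (locally L) ->
  is_RInt_gen f (at_point a) (Rbar_locally p_infty) L.
Proof.
  intros Hex Hl P [eps HP].
  assert (H1 := Hl _ (locally_ball L eps)).
  destruct H1 as [M HM].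
  apply (Filter_prod _ _ _ (fun x => x = a) (fun b => Rmax M a < b)).
  - reflexivity.
  - exists (Rmax M a); auto.
  - intros x y -> Hy. exists (RInt f a y). split.
    + apply (RInt_correct f), Hex. generalize (Rmax_r M a); lra.
    + apply HP, HM. generalize (Rmax_l M a); lra.
Qed.

Lemma lim_of_RIg (f : R -> R) (a L : R) :
  is_RInt_gen f (at_point a) (Rbar_locally p_infty) L ->
  filterlim (fun b => RInt f a b) (Rbar_locally p_infty) (locally L).
Proof.
  intros H P HP. destruct (H P HP) as [Q R' HQ HR Hqr].
  unfold filtermap. apply (filter_imp R'); auto.
  intros b Rb. destruct (Hqr a b HQ Rb) as [y [Hy Py]]. simpl in Hy.
  now rewrite (is_RInt_unique f a b y Hy).
Qed.

Lemma ev_pinf (g : R -> R) (L : R) (eps : posreal) :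
  filterlim g (Rbar_locally p_infty) (locally L) ->
  exists M, forall x, M < x -> Rabs (g x - L) < eps.
Proof.
  intros H. destruct (H _ (locally_ball L eps)) as [M HM]. exists M. intros x Hx.
  apply HM, Hx.
Qed.

Lemma RInt_abs_bound (f h : R -> R) (a b : R) : a <= b ->
  ex_RInt f a b -> ex_RInt h a b -> (forall t, a <= t <= b -> Rabs (f t) <= h t) ->
  Rabs (RInt f a b) <= RInt h a b.
Proof.
  intros Hab Hf Hh Hb.
  assert (H1 : RInt f a b <= RInt h a b).
  { apply RInt_le; auto. intros x Hx. generalize (Hb x ltac:(lra)).
    intros Hx'. apply Rabs_le_between in Hx'. lra. }
  assert (H2 : RInt (fun x => opp (h x)) a b <= RInt f a b).
  { apply RInt_le; auto. apply (ex_RInt_opp h); auto. intros x Hx. generalize (Hb x ltac:(lra)).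
    intros Hx'. apply Rabs_le_between in Hx'. unfold opp; simpl. lra. }
  rewrite (RInt_opp h) in H2 by auto. unfold opp in H2; simpl in H2.
  apply Rabs_le_between. lra.
Qed.

Lemma RIg_compare (f h : R -> R) (a H : R) :
  (forall b, a <= b -> ex_RInt f a b) -> (forall b, a <= b -> ex_RInt h a b) ->
  (forall t, a <= t -> Rabs (f t) <= h t) ->
  is_RInt_gen h (at_point a) (Rbar_locally p_infty) H ->
  exists L, is_RInt_gen f (at_point a) (Rbar_locally p_infty) L /\ Rabs L <= H.
Proof.
  intros Hf Hh Hb HH.
  assert (Lh := lim_of_RIg _ _ _ HH).
  set (F := filtermap (fun b => RInt f a b) (Rbar_locally p_infty)).
  assert (PF : ProperFilter F) by (apply filtermap_proper_filter, Rbar_locally_filter).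
  assert (Key : forall b c, a <= b <= c -> Rabs (RInt f a c - RInt f a b) <= RInt h a c - RInt h a b).
  { intros b c Hbc.
    rewrite <- (RInt_Chasles f a b c) by (try apply Hf; try apply (ex_RInt_Chasles_2 f a b c); try apply Hf; lra).
    rewrite <- (RInt_Chasles h a b c) by (try apply Hh; try apply (ex_RInt_Chasles_2 h a b c); try apply Hh; lra).
    unfold plus; simpl.
    assert (G : forall x y u v : R, Rabs y <= v -> Rabs (x + y - x) <= u + v - u).
    { intros x y u v Hy. replace (x + y - x) with y by ring. lra. }
    apply G. apply RInt_abs_bound; try lra.
    apply (ex_RInt_Chasles_2 f a b c); [lra| apply Hf; lra].
    apply (ex_RInt_Chasles_2 h a b c); [lra| apply Hh; lra].
    intros t Ht; apply Hb; lra. }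
  assert (CF : cauchy F).
  { intros eps. assert (e2 : 0 < eps / 2) by (generalize (cond_pos eps); lra).
    destruct (ev_pinf _ _ (mkposreal _ e2) Lh) as [M HM]; simpl in HM.
    set (b0 := Rmax M a + 1).
    exists (RInt f a b0). exists b0. intros c Hc. apply ball_R.
    assert (Hb0 : M < b0 /\ a <= b0) by (unfold b0; generalize (Rmax_l M a) (Rmax_r M a); lra).
    eapply Rle_lt_trans. apply Key; lra.
    generalize (HM c ltac:(lra)) (HM b0 ltac:(lra)). intros A1 A2.
    apply Rabs_lt_between in A1. apply Rabs_lt_between in A2. lra. }
  set (L := lim F).
  assert (LL : filterlim (fun b => RInt f a b) (Rbar_locally p_infty) (locally L)).
  { intros P [eps HP]. apply (filter_imp (ball L eps)). intros x Hx; apply HP, Hx.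
    apply complete_cauchy; auto. }
  exists L. split. apply RIg_of_lim; auto.
  destruct (Rle_or_lt (Rabs L) H) as [Hle|Hlt]; auto. exfalso.
  assert (e2 : 0 < (Rabs L - H) / 2) by lra.
  destruct (ev_pinf _ _ (mkposreal _ e2) LL) as [M1 HM1]; simpl in HM1.
  destruct (ev_pinf _ _ (mkposreal _ e2) Lh) as [M2 HM2]; simpl in HM2.
  set (b := Rmax (Rmax M1 M2) a + 1).
  assert (Hb' : M1 < b /\ M2 < b /\ a <= b) by
   (unfold b; generalize (Rmax_l (Rmax M1 M2) a) (Rmax_r (Rmax M1 M2) a) (Rmax_l M1 M2) (Rmax_r M1 M2); lra).
  generalize (HM1 b ltac:(lra)) (HM2 b ltac:(lra)). intros A1 A2.
  assert (A3 : Rabs (RInt f a b) <= RInt h a b).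
  { apply RInt_abs_bound; try apply Hf; try apply Hh; try lra. intros t Ht; apply Hb; lra. }
  apply Rabs_lt_between in A2.
  assert (A4 : Rabs L <= Rabs (RInt f a b) + Rabs (RInt f a b - L)).
  { generalize (RInt f a b) L. intros x y. replace y with (x - (x - y)) at 1 by ring.
    apply Rabs_triang_inv2 || (unfold Rminus; eapply Rle_trans; [apply Rabs_triang|]; rewrite Rabs_Ropp; lra). }
  lra.
Qed.

Lemma exRc (f : R -> R) (a b : R) :
  (forall z, Rmin a b <= z <= Rmax a b -> continuous f z) -> ex_RInt f a b.
Proof. intros H. exact (ex_RInt_continuous f a b H). Qed.

Lemma exRc' (f : R -> R) (a b : R) : a <= b ->
  (forall z, a <= z <= b -> continuous f z) -> ex_RInt f a b.
Proof. intros Hab H. apply exRc. rewrite Rmin_left, Rmax_right by lra. auto. Qed.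

Lemma contR (f : R -> R) (x : R) : ex_derive f x -> continuous f x.
Proof. intros H. exact (ex_derive_continuous (K:=R_AbsRing) (V:=R_NormedModule) f x H). Qed.


Lemma RIg_lin (f : R -> R) (L : R) :
  (forall b, 1 <= b -> ex_RInt f 1 b) ->
  is_RInt_gen (fun u => 2 * f (2 * u + 1)) (at_point 0) (Rbar_locally p_infty) L ->
  is_RInt_gen f (at_point 1) (Rbar_locally p_infty) L.
Proof.
  intros Hex H. apply RIg_of_lim; auto.
  assert (Hl := lim_of_RIg _ _ _ H).
  intros P HP. destruct (Hl P HP) as [M HM]. exists (Rmax 1 (2 * M + 1)).
  intros b Hb. generalize (Rmax_l 1 (2*M+1)) (Rmax_r 1 (2*M+1)); intros m1 m2.
  assert (E : RInt f 1 b = RInt (fun u => 2 * f (2 * u + 1)) 0 ((b - 1) / 2)).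
  { assert (E2 := RInt_comp_lin f 2 1 0 ((b-1)/2)).
    replace (2 * 0 + 1) with 1 in E2 by ring.
    replace (2 * ((b - 1) / 2) + 1) with b in E2 by field.
    rewrite <- E2. reflexivity. apply Hex; lra. }
  unfold filtermap. rewrite E. apply HM. lra.
Qed.

Lemma RIg_right0 (g : R -> R) (M : R) :
  (forall x, 0 <= x <= 1 -> continuous g x) ->
  (forall x, 0 <= x <= 1 -> Rabs (g x) <= M) ->
  is_RInt_gen g (at_right 0) (at_point 0) 0.
Proof.
  intros Hc Hb P [eps HP].
  assert (HM : 0 <= M) by (generalize (Hb 0 ltac:(lra)) (Rabs_pos (g 0)); lra).
  set (d := Rmin 1 (eps / (M + 1))).
  assert (Hd : 0 < d).
  { unfold d. apply Rmin_glb_lt. lra. apply Rdiv_lt_0_compat. apply cond_pos. lra. }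
  apply (Filter_prod _ _ _ (fun x => 0 < x < d) (fun y => y = 0)).
  - exists (mkposreal d Hd). intros y Hy Hy0. apply ball_R in Hy. simpl in Hy.
    split; auto. change (Rabs (y - 0) < d) in Hy. rewrite Rminus_0_r in Hy. apply Rabs_lt_between in Hy. lra.
  - reflexivity.
  - intros x y Hx ->. simpl.
    assert (d1 : d <= 1) by apply Rmin_l.
    assert (d2 : d <= eps / (M + 1)) by apply Rmin_r.
    assert (Ex : ex_RInt g 0 x).
    { apply exRc. intros z Hz. rewrite Rmin_left in Hz by lra.
      rewrite Rmax_right in Hz by lra. apply Hc; lra. }
    exists (RInt g x 0). split.
    + apply (RInt_correct g). apply ex_RInt_swap. auto.
    + apply HP. apply ball_R. rewrite Rminus_0_r.
      rewrite <- (opp_RInt_swap g) by auto. unfold opp; simpl. rewrite Rabs_Ropp.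
      eapply Rle_lt_trans. apply abs_RInt_le_const; auto. lra.
      intros t Ht; apply Hb; lra.
      rewrite Rminus_0_r.
      apply Rle_lt_trans with (eps / (M+1) * M).
      apply Rmult_le_compat_r; lra.
      assert (0 < eps) by apply cond_pos.
      apply Rmult_lt_reg_r with (M + 1). lra.
      replace (eps / (M + 1) * M * (M + 1)) with (eps * M) by (field; lra). nra.
Qed.

Lemma exp_pow_mult (n : nat) (x : R) : exp (INR n * x) = exp x ^ n.
Proof.
  induction n. simpl. rewrite Rmult_0_l, exp_0. reflexivity.
  rewrite S_INR, Rmult_plus_distr_r, exp_plus, IHn, Rmult_1_l. simpl. ring.
Qed.

Lemma exp_ge_pow (m : nat) (t : R) : 0 <= t -> (t / INR (S m)) ^ (S m) <= exp t.
Proof.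
  intros Ht. assert (Hm : 0 < INR (S m)) by (apply lt_0_INR; lia).
  replace t with (INR (S m) * (t / INR (S m))) at 2 by (field; lra).
  rewrite exp_pow_mult. apply pow_incr. split.
  apply Rdiv_le_0_compat; lra.
  generalize (exp_ineq1_le (t / INR (S m))). lra.
Qed.

Lemma exp_pow_bound (m : nat) (t : R) : 0 < t ->
  0 <= exp (- t) * t ^ m <= INR (S m) ^ (S m) / t.
Proof.
  intros Ht. split. apply Rmult_le_pos. apply Rlt_le, exp_pos. apply pow_le; lra.
  assert (Hm : 0 < INR (S m)) by (apply lt_0_INR; lia).
  assert (H := exp_ge_pow m t ltac:(lra)).
  rewrite exp_Ropp.
  assert (Hp : 0 < (t / INR (S m)) ^ S m) by (apply pow_lt; apply Rdiv_lt_0_compat; lra).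
  apply Rle_trans with (t ^ m / (t / INR (S m)) ^ S m).
  - unfold Rdiv. rewrite Rmult_comm. apply Rmult_le_compat_l. apply pow_le; lra.
    apply Rinv_le_contravar; auto.
  - right. unfold Rdiv. rewrite Rpow_mult_distr, pow_inv. set (s := INR (S m)) in *.
    change (t ^ S m) with (t * t ^ m). field. repeat split; try lra.
    apply pow_nonzero; lra. apply pow_nonzero; lra.
Qed.

Lemma lim_exp_pow (m : nat) :
  filterlim (fun t => exp (- t) * t ^ m) (Rbar_locally p_infty) (locally 0).
Proof.
  intros P [eps HP].
  set (C := INR (S m) ^ (S m)).
  assert (HC : 0 < C) by (apply pow_lt, lt_0_INR; lia).
  exists (C / eps). intros t Ht. apply HP. apply ball_R.
  assert (He := cond_pos eps).
  assert (Htp : 0 < t).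
  { apply Rlt_trans with (C / eps); auto. apply Rdiv_lt_0_compat; auto. }
  destruct (exp_pow_bound m t Htp) as [A1 A2]. rewrite Rminus_0_r, Rabs_pos_eq by auto.
  eapply Rle_lt_trans. apply A2. fold C.
  apply Rmult_lt_reg_r with t; auto. unfold Rdiv. rewrite Rmult_assoc, Rinv_l, Rmult_1_r by lra.
  assert (C < eps * t).
  { apply Rmult_lt_compat_l with (r := eps) in Ht; auto.
    replace (eps * (C / eps)) with C in Ht by (field; lra). exact Ht. }
  exact H.
Qed.


Lemma RIg_full (g h : R -> R) (M L : R) :
  (forall x, 0 <= x <= 1 -> continuous g x) ->
  (forall x, 0 <= x <= 1 -> Rabs (g x) <= M) ->
  (forall x, 0 < x -> g x = h x) ->
  is_RInt_gen g (at_point 0) (Rbar_locally p_infty) L ->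
  is_RInt_gen h (at_right 0) (Rbar_locally p_infty) L.
Proof.
  intros Hc Hb Heq HL.
  assert (H0 := RIg_right0 g M Hc Hb).
  assert (H1 := is_RInt_gen_Chasles g 0 0 L H0 HL).
  unfold plus in H1; simpl in H1; rewrite Rplus_0_l in H1.
  apply (is_RInt_gen_ext g h); auto.
  apply (Filter_prod _ _ _ (fun x => 0 < x) (fun y => 0 < y)).
  - unfold at_right, within. apply filter_forall. auto.
  - exists 0. auto.
  - intros x y Hx Hy z Hz. simpl in Hz. apply Heq.
    generalize (Rmin_glb_lt x y 0 Hx Hy). lra.
Qed.

Lemma is_derive_eq (f : R -> R) (x l l' : R) : is_derive f x l -> l = l' -> is_derive f x l'.
Proof. intros H <-; exact H. Qed.

Fixpoint Pn (n : nat) (t : R) : R :=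
  match n with
  | O => 1
  | S m => t ^ (S m) + INR (S m) * Pn m t
  end.

Lemma Pn_deriv (n : nat) (t : R) : is_derive (Pn n) t (Pn n t - t ^ n).
Proof.
  induction n.
  - simpl. apply is_derive_ext with (fun _ => 1). reflexivity.
    rewrite Rminus_diag. apply (is_derive_const (K:=R_AbsRing) (V:=R_NormedModule) 1).
  - change (Pn (S n)) with (fun t => t ^ (S n) + INR (S n) * Pn n t).
    assert (D1 := is_derive_pow (fun x => x) (S n) t 1 (is_derive_id t)).
    assert (D2 := is_derive_scal (Pn n) t (INR (S n)) _ IHn).
    assert (D3 := is_derive_plus _ _ t _ _ D1 D2).
    eapply is_derive_eq. exact D3.
    unfold plus; cbn -[INR pow]. change (t ^ S n) with (t * t ^ n). cbv beta. ring.
Qed.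

Lemma Gfun_deriv (n : nat) (t : R) :
  is_derive (fun t => - exp (- t) * Pn n t) t (exp (- t) * t ^ n).
Proof.
  assert (D1 : is_derive (fun t => - exp (- t)) t (exp (- t))).
  { auto_derive; auto. ring. }
  assert (D := is_derive_mult _ _ t _ _ D1 (Pn_deriv n t) ltac:(intros; apply Rmult_comm)).
  eapply is_derive_eq. exact D. unfold plus, mult; simpl. ring.
Qed.

Lemma Pn0 (n : nat) : Pn n 0 = INR (fact n).
Proof.
  induction n. reflexivity.
  change (Pn (S n) 0) with (0 ^ S n + INR (S n) * Pn n 0).
  rewrite IHn, fact_simpl, mult_INR. simpl. ring.
Qed.

Lemma Pn_lim (n : nat) : is_lim (fun t => exp (- t) * Pn n t) p_infty 0.
Proof.
  induction n.
  - apply is_lim_ext with (fun t => exp (- t) * t ^ 0). intros; reflexivity.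
    apply lim_exp_pow.
  - apply is_lim_ext with (fun t => exp (- t) * t ^ S n + INR (S n) * (exp (- t) * Pn n t)).
    intros t. change (Pn (S n) t) with (t ^ S n + INR (S n) * Pn n t). ring.
    replace (Finite 0) with (Finite (0 + 0)) by (f_equal; ring).
    apply is_lim_plus'. apply lim_exp_pow.
    assert (L := is_lim_scal_l _ (INR (S n)) p_infty 0 IHn).
    simpl in L. rewrite Rmult_0_r in L. exact L.
Qed.

Lemma Gamma_pre (n : nat) :
  is_RInt_gen (fun t => exp (- t) * t ^ n) (at_point 0) (Rbar_locally p_infty) (INR (fact n)).
Proof.
  set (G := fun t => - exp (- t) * Pn n t).
  assert (HI : forall b, is_RInt (fun t => exp (- t) * t ^ n) 0 b (G b - G 0)).
  { intros b. apply (is_RInt_derive G). intros x _. apply Gfun_deriv.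
    intros x _. apply contR. auto_derive. auto. }
  apply RIg_of_lim.
  - intros b _. exists (G b - G 0). apply HI.
  - apply filterlim_ext with (fun b => - (exp (- b) * Pn n b) + INR (fact n)).
    + intros b. rewrite (is_RInt_unique _ _ _ _ (HI b)). unfold G. rewrite Pn0.
      rewrite Ropp_0, exp_0. ring.
    + assert (L := is_lim_plus' _ _ p_infty _ _ (is_lim_opp _ p_infty 0 (Pn_lim n))
                     (is_lim_const (INR (fact n)) p_infty)).
      simpl in L. rewrite Ropp_0, Rplus_0_l in L. exact L.
Qed.

Theorem Gamma_nat (n : nat) : Defs.Gamma (INR (S n)) = INR (fact n).
Proof.
  unfold Defs.Gamma. apply is_RInt_gen_unique.
  apply (RIg_full (fun t => exp (- t) * t ^ n) _ 1).
  - intros x _. apply contR. auto_derive. auto.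
  - intros x Hx. rewrite Rabs_pos_eq.
    rewrite <- (Rmult_1_l 1). apply Rmult_le_compat.
    apply Rlt_le, exp_pos. apply pow_le; lra.
    rewrite <- exp_0. destruct (Rle_lt_or_eq_dec 0 x) as [hx|hx]; try lra. apply Rlt_le, exp_increasing. lra. rewrite <- hx, Ropp_0; lra.
    rewrite <- (pow1 n). apply pow_incr. lra.
    apply Rmult_le_pos. apply Rlt_le, exp_pos. apply pow_le; lra.
  - intros x Hx. f_equal. rewrite S_INR. replace (INR n + 1 - 1) with (INR n) by ring.
    rewrite Rpower_pow; auto.
  - apply Gamma_pre.
Qed.


Definition trm (c t : R) (n : nat) : R := exp (- c * (INR (S n)) ^ 2 * t).
Definition T (c t : R) : R := Series (trm c t).

Lemma trm_pos c t n : 0 < trm c t n.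
Proof. apply exp_pos. Qed.

Lemma trm_geom c t n : 0 < c -> 0 < t -> trm c t n <= exp (- c * t) ^ (S n).
Proof.
  intros Hc Ht. unfold trm. rewrite <- exp_pow_mult. apply Rlt_le in Hc.
  destruct (Rle_lt_or_eq_dec _ _ Hc) as [Hc'|Hc']; [| subst; right; f_equal; ring].
  assert (H1 : 1 <= INR (S n)) by (rewrite S_INR; generalize (pos_INR n); lra).
  set (s := INR (S n)) in *.
  destruct (Rle_lt_or_eq_dec _ _ H1) as [H2|H2].
  - apply Rlt_le, exp_increasing.
    assert (0 < c * t) by nra.
    assert (s < s ^ 2) by (replace (s ^ 2) with (s * s) by ring; nra). nra.
  - rewrite <- H2. right. f_equal. ring.
Qed.

Lemma ex_T c t : 0 < c -> 0 < t -> ex_series (trm c t).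
Proof.
  intros Hc Ht. set (q := exp (- c * t)).
  assert (Hq : 0 < q < 1).
  { split. apply exp_pos. rewrite <- exp_0. apply exp_increasing. nra. }
  apply (ex_series_le (K:=R_AbsRing) (V:=R_CompleteNormedModule) _ (fun n => q * q ^ n)).
  - intros n. unfold norm; simpl. rewrite Rabs_pos_eq by (apply Rlt_le, trm_pos).
    apply trm_geom; auto.
  - apply (ex_series_scal_l (V:=R_NormedModule) q (fun n => q ^ n)). apply ex_series_geom.
    rewrite Rabs_pos_eq; lra.
Qed.

Lemma Series_nonneg (a : nat -> R) : (forall n, 0 <= a n) -> ex_series a -> 0 <= Series a.
Proof.
  intros Ha He. assert (E : Series (fun n => 0 * a n) = 0) by (rewrite Series_scal_l; ring).
  rewrite <- E. apply Series_le; auto. intros n; split; [right; ring| rewrite Rmult_0_l; auto].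
Qed.

Lemma T_nonneg c t : 0 < c -> 0 < t -> 0 <= T c t.
Proof. intros. apply Series_nonneg. intros; apply Rlt_le, trm_pos. apply ex_T; auto. Qed.

Lemma T_pos c t : 0 < c -> 0 < t -> 0 < T c t.
Proof.
  intros Hc Ht. unfold T. rewrite Series_incr_1 by (apply ex_T; auto).
  assert (0 < trm c t 0) by apply trm_pos.
  assert (0 <= Series (fun k => trm c t (S k))).
  { apply Series_nonneg. intros; apply Rlt_le, trm_pos. apply (proj1 (ex_series_incr_1 (trm c t))), ex_T; auto. }
  lra.
Qed.

Lemma T_bound c t : 0 < c -> 1 <= t -> T c t <= T c 1 * exp (- c * (t - 1)).
Proof.
  intros Hc Ht. unfold T. rewrite Rmult_comm, <- Series_scal_l.
  apply Series_le.
  - intros n. split. apply Rlt_le, trm_pos. unfold trm. rewrite <- exp_plus.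
    assert (H1 : 1 <= INR (S n) ^ 2).
    { rewrite S_INR. generalize (pos_INR n). intros. replace ((INR n + 1) ^ 2) with ((INR n + 1) * (INR n + 1)) by ring. nra. }
    destruct (Rle_lt_or_eq_dec _ _ Ht) as [H2|H2].
    + destruct (Rle_lt_or_eq_dec _ _ H1) as [H3|H3].
      * apply Rlt_le, exp_increasing. assert (0 < c * ((INR (S n) ^ 2 - 1) * (t - 1))) by (apply Rmult_lt_0_compat; [lra| apply Rmult_lt_0_compat; lra]). nra.
      * rewrite <- H3. right; f_equal; ring.
    + rewrite <- H2. right; f_equal; ring.
  - apply (ex_series_scal_l (V:=R_NormedModule)). apply ex_T; lra.
Qed.

Lemma tail_bound (a : nat -> R) (q : R) : 0 < q < 1 -> (forall k, 0 <= a k <= q ^ k) ->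
  forall m p, 0 <= sum_n a (m + p) - sum_n a m <= q ^ (S m) * (1 - q ^ p) / (1 - q).
Proof.
  intros Hq Ha m p. induction p.
  - rewrite Nat.add_0_r. simpl. split; [lra|]. right. field. lra.
  - rewrite Nat.add_succ_r, sum_Sn. unfold plus; simpl.
    destruct (Ha (S (m + p))) as [A1 A2].
    replace (q ^ S (m + p)) with (q ^ S m * q ^ p) in A2 by (rewrite <- pow_add; f_equal; lia).
    split. lra.
    apply Rle_trans with (q ^ S m * (1 - q ^ p) / (1 - q) + q ^ S m * q ^ p). lra.
    right. simpl. field. lra.
Qed.

Lemma psum_deriv c N x : ex_derive (fun y => sum_n (trm c y) N) x.
Proof.
  induction N.
  - apply (ex_derive_ext (fun y => trm c y 0)). intros; rewrite sum_O; auto.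
    unfold trm. auto_derive. auto.
  - apply (ex_derive_ext (fun y => plus (sum_n (trm c y) N) (trm c y (S N)))).
    intros; rewrite sum_Sn; auto.
    apply (ex_derive_plus (K:=R_AbsRing) (V:=R_NormedModule)); auto.
    unfold trm. auto_derive. auto.
Qed.

Lemma T_cont c x : 0 < c -> 1 <= x -> continuous (T c) x.
Proof.
  intros Hc Hx.
  set (D := fun u => / 2 < u).
  set (q := exp (- c * / 2)).
  assert (Hq : 0 < q < 1).
  { split. apply exp_pos. rewrite <- exp_0. apply exp_increasing. nra. }
  assert (CV : CVU_dom (fun N y => sum_n (trm c y) N) D).
  { apply CVU_dom_cauchy. intros eps.
    destruct (pow_lt_1_zero q ltac:(rewrite Rabs_pos_eq; lra) (eps * (1 - q))) as [N HN].
    { apply Rmult_lt_0_compat. apply cond_pos. lra. }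
    exists N. intros n m y Hy Hn Hm.
    assert (Hterm : forall k, 0 <= trm c y k <= q ^ k).
    { intros k. split. apply Rlt_le, trm_pos.
      apply Rle_trans with (exp (- c * y) ^ S k). apply trm_geom; auto. unfold D in Hy; lra.
      apply Rle_trans with (q ^ S k).
      apply pow_incr. split. apply Rlt_le, exp_pos. unfold q.
      apply Rlt_le, exp_increasing. unfold D in Hy. nra.
      simpl. rewrite <- (Rmult_1_l (q ^ k)) at 2. apply Rmult_le_compat_r. apply pow_le; lra. lra. }
    assert (G : forall m p, (N <= m)%nat -> Rabs (sum_n (trm c y) (m + p) - sum_n (trm c y) m) < eps).
    { intros m' p Hm'. destruct (tail_bound _ q Hq Hterm m' p) as [B1 B2].
      rewrite Rabs_pos_eq by lra. eapply Rle_lt_trans. apply B2.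
      assert (HS := HN (S m') ltac:(lia)). rewrite Rabs_pos_eq in HS by (apply pow_le; lra).
      assert (0 <= q ^ p) by (apply pow_le; lra).
      assert (0 <= q ^ S m') by (apply pow_le; lra).
      apply Rmult_lt_reg_r with (1 - q). lra.
      unfold Rdiv. rewrite Rmult_assoc, Rinv_l, Rmult_1_r by lra. nra. }
    destruct (Nat.le_ge_cases m n) as [Hmn|Hmn].
    - replace n with (m + (n - m))%nat by lia. apply G; auto.
    - rewrite Rabs_minus_sym. replace m with (n + (m - n))%nat by lia. apply G; auto. }
  assert (Hcont := CVU_cont_open _ D (open_gt _) CV).
  assert (H1 : continuity_pt (fun y => real (Lim_seq (fun n => sum_n (trm c y) n))) x).
  { apply Hcont. intros n y _. apply continuity_pt_filterlim, contR, psum_deriv.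
    unfold D; lra. }
  apply continuity_pt_filterlim in H1. exact H1.
Qed.


Lemma lim_ge (g : R -> R) (L m M0 : R) :
  filterlim g (Rbar_locally p_infty) (locally L) ->
  (forall b, M0 < b -> m <= g b) -> m <= L.
Proof.
  intros H Hg. destruct (Rle_or_lt m L) as [|Hlt]; auto. exfalso.
  assert (e2 : 0 < (m - L) / 2) by lra.
  destruct (ev_pinf _ _ (mkposreal _ e2) H) as [M HM]; simpl in HM.
  set (b := Rmax M M0 + 1).
  assert (M < b /\ M0 < b) by (unfold b; generalize (Rmax_l M M0) (Rmax_r M M0); lra).
  generalize (HM b ltac:(lra)) (Hg b ltac:(lra)). intros A1 A2.
  apply Rabs_lt_between in A1. lra.
Qed.

Lemma lim_affine (g : R -> R) (al be : R) :
  is_lim g p_infty 0 -> is_lim (fun b => al + be * g b) p_infty al.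
Proof.
  intros H. assert (L := is_lim_plus' _ _ p_infty _ _ (is_lim_const al p_infty)
                        (is_lim_scal_l _ be p_infty 0 H)).
  simpl in L. rewrite Rmult_0_r, Rplus_0_r in L. exact L.
Qed.

Lemma lim_exp_c (c : R) : 0 < c -> is_lim (fun b => exp (- c * b)) p_infty 0.
Proof.
  intros Hc.
  assert (L1 : filterlim (fun b => c * b) (Rbar_locally p_infty) (Rbar_locally p_infty)).
  { intros P [M HM]. exists (M / c). intros x Hx. apply HM.
    apply Rmult_lt_compat_l with (r := c) in Hx; auto.
    replace (c * (M / c)) with M in Hx by (field; lra). exact Hx. }
  assert (L2 := filterlim_comp _ _ _ (fun b => c * b) (fun t => exp (- t) * t ^ 0) _ _ _ L1 (lim_exp_pow 0)).
  eapply filterlim_ext; [|exact L2]. intros x. simpl. rewrite Rmult_1_r. f_equal. ring.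
Qed.

Lemma exp_int (c : R) : 0 < c ->
  is_RInt_gen (fun u => exp (- c * u)) (at_point 0) (Rbar_locally p_infty) (/ c).
Proof.
  intros Hc.
  set (G := fun u => - exp (- c * u) / c).
  assert (HI : forall b, is_RInt (fun u => exp (- c * u)) 0 b (G b - G 0)).
  { intros b. apply (is_RInt_derive G). intros x _. unfold G.
    auto_derive. auto. field. lra.
    intros x _. apply contR. auto_derive. auto. }
  apply RIg_of_lim.
  - intros b _. exists (G b - G 0). apply HI.
  - apply filterlim_ext with (fun b => / c + (- / c) * exp (- c * b)).
    + intros b. rewrite (is_RInt_unique _ _ _ _ (HI b)). unfold G.
      rewrite Rmult_0_r, exp_0. field. lra.
    + apply lim_affine, lim_exp_c; auto.
Qed.

Definition sJ (k : nat) : R := 1/2 - INR (2*k+2) - 1.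
Definition jf (k : nat) (c u : R) : R := exp (- c * u) * u ^ (2*k+1) * Rpower (1 + u) (sJ k).

Lemma INR_2k2 (k : nat) : INR (2*k+2) = INR (2*k+1) + 1.
Proof. replace (2*k+2)%nat with (S (2*k+1)) by lia. apply S_INR. Qed.

Lemma jf_bound k c u : 0 <= u -> 0 <= jf k c u <= exp (- c * u).
Proof.
  intros Hu. unfold jf.
  assert (E1 : 0 < exp (- c * u)) by apply exp_pos.
  assert (E2 : 0 < Rpower (1 + u) (- sJ k)) by apply exp_pos.
  assert (E3 : 0 <= u ^ (2*k+1)) by (apply pow_le; lra).
  assert (B : u ^ (2*k+1) <= Rpower (1 + u) (- sJ k)).
  { apply Rle_trans with ((1 + u) ^ (2*k+1)). apply pow_incr; lra.
    rewrite <- Rpower_pow by lra. apply Rle_Rpower. lra.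
    unfold sJ. rewrite INR_2k2. lra. }
  replace (sJ k) with (- - sJ k) by ring. rewrite Rpower_Ropp.
  assert (0 <= u ^ (2*k+1) * / Rpower (1 + u) (- sJ k) <= 1).
  { split. apply Rmult_le_pos; auto. apply Rlt_le, Rinv_0_lt_compat; auto.
    apply Rmult_le_reg_r with (Rpower (1 + u) (- sJ k)); auto.
    rewrite Rmult_assoc, Rinv_l, Rmult_1_r, Rmult_1_l by lra. auto. }
  rewrite Rmult_assoc. split. apply Rmult_le_pos; lra.
  rewrite <- (Rmult_1_r (exp (- c * u))) at 2. apply Rmult_le_compat_l; lra.
Qed.

Lemma jf_cont k c u : 0 <= u -> continuous (jf k c) u.
Proof. intros Hu. unfold jf, Rpower. apply contR. auto_derive. lra. Qed.

Definition J (k : nat) (c : R) : R := RInt_gen (jf k c) (at_point 0) (Rbar_locally p_infty).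

Lemma J_is k c : 0 < c -> is_RInt_gen (jf k c) (at_point 0) (Rbar_locally p_infty) (J k c).
Proof.
  intros Hc.
  destruct (RIg_compare (jf k c) (fun u => exp (- c * u)) 0 (/ c)) as [L [HL _]].
  - intros b Hb. apply exRc'; auto. intros z Hz. apply jf_cont; lra.
  - intros b Hb. apply exRc'; auto. intros z Hz. apply contR. auto_derive. auto.
  - intros t Ht. destruct (jf_bound k c t Ht). rewrite Rabs_pos_eq; lra.
  - apply exp_int; auto.
  - unfold J. rewrite (is_RInt_gen_unique _ _ HL). exact HL.
Qed.

Lemma J_pos k c : 0 < c -> 0 < J k c.
Proof.
  intros Hc. assert (H := lim_of_RIg _ _ _ (J_is k c Hc)).
  assert (Hex : forall b, 0 <= b -> ex_RInt (jf k c) 0 b).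
  { intros b Hb. apply exRc'; auto. intros z Hz. apply jf_cont; lra. }
  assert (Hm : 0 < RInt (jf k c) 0 1).
  { apply RInt_gt_0. lra. intros x Hx. unfold jf. apply Rmult_lt_0_compat.
    apply Rmult_lt_0_compat. apply exp_pos. apply pow_lt; lra. apply exp_pos.
    intros x Hx. apply jf_cont; lra. }
  apply Rlt_le_trans with (RInt (jf k c) 0 1); auto.
  apply (lim_ge _ _ _ 1 H). intros b Hb.
  rewrite <- (RInt_Chasles (jf k c) 0 1 b).
  - unfold plus; simpl. assert (0 <= RInt (jf k c) 1 b); [|lra].
    apply RInt_ge_0. lra. apply exRc'. lra. intros z Hz. apply jf_cont; lra.
    intros x Hx. apply jf_bound. lra.
  - apply Hex; lra.
  - apply exRc'. lra. intros z Hz. apply jf_cont; lra.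
Qed.

Lemma Tricomi_val k z : 0 < z ->
  Defs.TricomiU (INR (2*k+2)) (1/2) z = J k z / INR (fact (2*k+1)).
Proof.
  intros Hz. unfold Defs.TricomiU.
  replace (INR (2*k+2)) with (INR (S (2*k+1))) at 1 by (f_equal; lia).
  rewrite Gamma_nat. unfold Rdiv. rewrite Rmult_comm. f_equal.
  apply is_RInt_gen_unique.
  apply (RIg_full (jf k z) _ 1).
  - intros x Hx. apply jf_cont; lra.
  - intros x Hx. destruct (jf_bound k z x ltac:(lra)). rewrite Rabs_pos_eq by lra.
    apply Rle_trans with (exp (- z * x)); auto. rewrite <- exp_0.
    destruct (Rle_lt_or_eq_dec 0 x) as [hx|hx]; try lra. apply Rlt_le, exp_increasing. nra.
    rewrite <- hx. right. f_equal. ring.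
  - intros x Hx. unfold jf, sJ. f_equal. f_equal.
    rewrite INR_2k2. replace (INR (2 * k + 1) + 1 - 1) with (INR (2*k+1)) by ring.
    rewrite Rpower_pow; auto.
  - apply J_is; auto.
Qed.


Definition w (k : nat) (t : R) : R := (t - 1) ^ (2*k+1) / Rpower (1 + t) (INR (2*k) + 5/2).
Definition hc (k : nat) (c t : R) : R := exp (- c * (t - 1)) * w k t.

Lemma w_cont k t : 1 <= t -> continuous (w k) t.
Proof.
  intros Ht. unfold w, Rpower. apply contR. auto_derive. split. lra.
  split; auto. apply Rgt_not_eq, exp_pos.
Qed.

Lemma w_nonneg k t : 1 <= t -> 0 <= w k t.
Proof.
  intros Ht. unfold w. apply Rdiv_le_0_compat. apply pow_le; lra. apply exp_pos.
Qed.

Lemma hc_cont k c t : 1 <= t -> continuous (hc k c) t.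
Proof.
  intros Ht. unfold hc.
  apply (continuous_mult (K:=R_AbsRing) (fun t => exp (- c * (t - 1))) (w k)).
  apply contR. auto_derive. auto. apply w_cont; auto.
Qed.

Lemma hc_jf k c u : 0 < u -> 2 * hc k c (2 * u + 1) = / sqrt 2 * jf k (2 * c) u.
Proof.
  intros Hu. unfold hc, w, jf, sJ.
  replace (2 * u + 1 - 1) with (2 * u) by ring.
  replace (1 + (2 * u + 1)) with (2 * (1 + u)) by ring.
  rewrite <- Rpower_mult_distr by lra.
  replace (INR (2 * k) + 5 / 2) with (INR (2*k+2) + / 2) by
    (replace (2*k+2)%nat with (2*k + 2)%nat by lia; rewrite plus_INR; simpl; lra).
  rewrite Rpower_plus, Rpower_sqrt by lra.
  replace (2*k+2)%nat with (S (2*k+1)) by lia.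
  rewrite Rpower_pow by lra.
  replace (1 / 2 - INR (S (2 * k + 1)) - 1) with (- (INR (S (2*k+1)) + / 2)) by lra.
  rewrite Rpower_Ropp.
  replace (- (2 * c) * u) with (- c * (2 * u)) by ring.
  rewrite Rpow_mult_distr.
  assert (0 < sqrt 2) by (apply sqrt_lt_R0; lra).
  assert (0 < Rpower (1 + u) (INR (S (2 * k + 1)) + / 2)) by apply exp_pos.
  assert (0 < 2 ^ (2*k+1)) by (apply pow_lt; lra).
  change (2 ^ S (2*k+1)) with (2 * 2 ^ (2*k+1)).
  field. repeat split; lra.
Qed.

Lemma RIg_scal_R (f : R -> R) (K L : R) (a : R) :
  is_RInt_gen f (at_point a) (Rbar_locally p_infty) L ->
  is_RInt_gen (fun t => K * f t) (at_point a) (Rbar_locally p_infty) (K * L).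
Proof. intros H. exact (is_RInt_gen_scal f K L H). Qed.

Lemma h_is k c : 0 < c ->
  is_RInt_gen (hc k c) (at_point 1) (Rbar_locally p_infty) (/ sqrt 2 * J k (2 * c)).
Proof.
  intros Hc. apply RIg_lin.
  - intros b Hb. apply exRc'; auto. intros z Hz. apply hc_cont; lra.
  - assert (S := RIg_scal_R (jf k (2 * c)) (/ sqrt 2) _ _ (J_is k (2 * c) ltac:(lra))).
    apply (is_RInt_gen_ext (fun y => / sqrt 2 * jf k (2 * c) y)); [| exact S].
    apply (Filter_prod _ _ _ (fun x => x = 0) (fun y => 0 < y)).
    + reflexivity.
    + exists 0. auto.
    + intros x y -> Hy z Hz. simpl in Hz. rewrite Rmin_left, Rmax_right in Hz by lra.
      rewrite hc_jf by lra. reflexivity.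
Qed.



Lemma piece (k : nat) (c K : R) : 0 < c -> 0 < K ->
  exists L, is_RInt_gen (fun t => K * T c t * w k t) (at_point 1) (Rbar_locally p_infty) L
    /\ 0 <= L /\ L <= K * T c 1 * (/ sqrt 2 * J k (2 * c)).
Proof.
  intros Hc HK.
  assert (HT1 := T_pos c 1 Hc ltac:(lra)).
  assert (Hh := RIg_scal_R _ (K * T c 1) _ _ (h_is k c Hc)).
  assert (Cf : forall z, 1 <= z -> continuous (fun t => K * T c t * w k t) z).
  { intros z Hz. apply (continuous_mult (K:=R_AbsRing) (fun t => K * T c t) (w k)).
    apply (continuous_mult (K:=R_AbsRing) (fun _ => K) (T c)).
    apply continuous_const. apply T_cont; auto. apply w_cont; auto. }
  destruct (RIg_compare (fun t => K * T c t * w k t) (fun t => K * T c 1 * hc k c t) 1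
             (K * T c 1 * (/ sqrt 2 * J k (2 * c)))) as [L [HL HLb]].
  - intros b Hb. apply exRc'; auto. intros z Hz. apply Cf. lra.
  - intros b Hb. apply exRc'; auto. intros z Hz.
    apply (continuous_mult (K:=R_AbsRing) (fun _ => K * T c 1) (hc k c)).
    apply continuous_const. apply hc_cont; lra.
  - intros t Ht. assert (Tt := T_nonneg c t Hc ltac:(lra)). assert (Wt := w_nonneg k t Ht).
    rewrite Rabs_pos_eq by (apply Rmult_le_pos; [apply Rmult_le_pos|]; lra).
    unfold hc. assert (TB := T_bound c t Hc Ht).
    replace (K * T c 1 * (exp (- c * (t - 1)) * w k t)) with (K * (T c 1 * exp (- c * (t - 1))) * w k t) by ring.
    apply Rmult_le_compat_r; auto. apply Rmult_le_compat_l; lra.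
  - exact Hh.
  - exists L. split; auto. split.
    + apply (lim_ge _ _ _ 1 (lim_of_RIg _ _ _ HL)). intros b Hb.
      apply RInt_ge_0. lra. apply exRc'. lra. intros z Hz; apply Cf; lra.
      intros x Hx. assert (Tt := T_nonneg c x Hc ltac:(lra)). assert (Wt := w_nonneg k x ltac:(lra)).
      apply Rmult_le_pos; [apply Rmult_le_pos|]; lra.
    + apply Rabs_le_between in HLb. lra.
Qed.


Theorem theorem4 (a : R) (k : nat) (ha : 0 < a) :
  Rabs (epsilon_odd k a) < B_odd k a.
Proof.
  assert (HPI := PI_RGT_0).
  set (c1 := PI * a). set (c2 := PI / a).
  assert (Hc1 : 0 < c1) by (unfold c1; nra).
  assert (Hc2 : 0 < c2) by (unfold c2; apply Rdiv_lt_0_compat; lra).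
  set (sa := Rpower a (1/2)).
  assert (Hsa : 0 < sa) by apply exp_pos.
  assert (Ephi : forall t, phi_a a t = T c1 t).
  { intros t. apply Series_ext. intros n. unfold trm, c1. f_equal. ring. }
  assert (Epsi : forall t, psi_a a t = T c2 t).
  { intros t. apply Series_ext. intros n. unfold trm, c2. f_equal. field. lra. }
  assert (EP1 : Psi a = T c1 1).
  { apply Series_ext. intros n. unfold trm, c1. f_equal. ring. }
  assert (EP2 : Psi (/ a) = T c2 1).
  { apply Series_ext. intros n. unfold trm, c2. f_equal. field. lra. }
  destruct (piece k c1 sa Hc1 Hsa) as [L1 [HL1 [L1p L1b]]].
  destruct (piece k c2 1 Hc2 ltac:(lra)) as [L2 [HL2 [L2p L2b]]].
  set (H1 := sa * T c1 1 * (/ sqrt 2 * J k (2 * c1))) in *.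
  set (H2 := 1 * T c2 1 * (/ sqrt 2 * J k (2 * c2))) in *.
  assert (Hs2 : 0 < sqrt 2) by (apply sqrt_lt_R0; lra).
  assert (HH1 : 0 < H1).
  { unfold H1. assert (0 < T c1 1) by (apply T_pos; lra). assert (0 < J k (2 * c1)) by (apply J_pos; lra).
    assert (0 < / sqrt 2) by (apply Rinv_0_lt_compat; lra).
    repeat apply Rmult_lt_0_compat; auto. }
  assert (HH2 : 0 < H2).
  { unfold H2. assert (0 < T c2 1) by (apply T_pos; lra). assert (0 < J k (2 * c2)) by (apply J_pos; lra).
    assert (0 < / sqrt 2) by (apply Rinv_0_lt_compat; lra).
    repeat apply Rmult_lt_0_compat; auto; lra. }
  assert (Heps : epsilon_odd k a = / (4 * PI * a) * (L1 - L2)).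
  { unfold epsilon_odd. f_equal. apply is_RInt_gen_unique.
    assert (M := is_RInt_gen_minus _ _ _ _ HL1 HL2).
    apply (is_RInt_gen_ext (fun y => minus (sa * T c1 y * w k y) (1 * T c2 y * w k y))); [|exact M].
    apply (Filter_prod _ _ _ (fun _ => True) (fun _ => True)).
    reflexivity. exists 0; auto.
    intros x y _ _ z _. rewrite Ephi, Epsi. unfold minus, plus, opp, w, sa; simpl. ring. }
  assert (HB : B_odd k a = / (4 * PI * a) * (H1 + H2)).
  { unfold B_odd, E_odd.
    rewrite !Tricomi_val by (apply Rmult_lt_0_compat; [lra| try apply Rinv_0_lt_compat; lra]).
    rewrite EP1, EP2.
    replace (2 * PI * a) with (2 * c1) by (unfold c1; ring).
    replace (2 * PI * / a) with (2 * c2) by (unfold c2; unfold Rdiv; ring).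
    set (R34 := Rpower a (-3/4)).
    assert (HR34 : 0 < R34) by apply exp_pos.
    assert (F1 : Rpower a (1/4) = sa / a / R34).
    { unfold R34, sa. apply Rmult_eq_reg_r with (Rpower a (-3/4)). 2: apply Rgt_not_eq, exp_pos.
      unfold Rdiv. rewrite Rmult_assoc, Rinv_l, Rmult_1_r by (apply Rgt_not_eq, exp_pos).
      rewrite <- Rpower_plus. replace (1 * / 4 + -3 * / 4) with (1 * / 2 + - (1)) by field.
      rewrite Rpower_plus, Rpower_Ropp, Rpower_1 by auto. reflexivity. }
    assert (F2 : Rpower (/ a) (1/4) = / a / R34).
    { unfold R34. apply Rmult_eq_reg_r with (Rpower a (-3/4)). 2: apply Rgt_not_eq, exp_pos.
      unfold Rdiv. rewrite Rmult_assoc, Rinv_l, Rmult_1_r by (apply Rgt_not_eq, exp_pos).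
      replace (Rpower (/ a) (1 * / 4)) with (Rpower a (- (1 * / 4))).
      rewrite <- Rpower_plus. replace (- (1 * / 4) + -3 * / 4) with (- (1)) by field.
      rewrite Rpower_Ropp, Rpower_1 by auto. reflexivity.
      unfold Rpower. rewrite ln_Rinv by auto. f_equal. ring. }
    rewrite F1, F2. unfold H1, H2.
    assert (HF : 0 < INR (fact (2 * k + 1))) by (apply lt_0_INR, lt_O_fact).
    field. repeat split; lra. }
  rewrite Heps, HB.
  assert (Hk : 0 < / (4 * PI * a)) by (apply Rinv_0_lt_compat; nra).
  rewrite Rabs_mult, Rabs_pos_eq by lra.
  apply Rmult_lt_compat_l; auto.
  apply Rabs_lt_between. lra.
Qed.
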